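(* Let $T$ be the BFS tree produced by temporal BFS on a temporal graph $G=(V,E)$ from source $s$ with starting time $t_s$, let $v\neq s$, and let $v_o$ be an occurrence of $v$ in $T$ with level $d$ and time $\tau$. Then $\tau$ is the earliest time at which $s$ can reach $v$ within $d$ hops starting from $t_s$, i.e. $\tau=\min\{t_{end}(P)\}$ where $P$ ranges over all temporal paths from $s$ to $v$ starting at or after $t_s$ with at most $d$ hops.
   Context: A temporal graph is a pair $G=(V,E)$ where $V$ is a finite set of vertices and $E$ is a finite set of temporal edges, i.e. triples $(u,v,t)$ with $u,v\in V$, $u\neq v$, $t\in\mathbb{R}$ (the time at which the edge is active); distinct elements of $E$ are distinct triples. Fix $t_s\in\mathbb{R}$ and $s\in V$. A temporal path from $x$ to $y$ (starting at or after $t_s$) is a sequence $P=\langle (w_1,w_2,t_1),\dots,(w_k,w_{k+1},t_k)\rangle$ of $k\ge1$ edges of $E$ with $w_1=x$, $w_{k+1}=y$ and $t_s\le t_1\le t_2\le\dots\le t_k$; its number of hops is $k$ and $t_{end}(P)=t_k$. Temporal BFS. Records are tuples $(x,d,\tau,p)$ (vertex $x$, level $d$, time $\tau$, predecessor record $p$ or none); every record ever created is an occurrence (node) of the BFS tree $T$, rooted at the initial record, with a tree edge from the predecessor record to the record; the level and time of an occurrence are the final values of its fields. For each $x\in V$ a current value $\sigma(x)$ is kept, initially $\infty$, and set to $\tau$ whenever a record of $x$ is created or its time is updated to $\tau$. Initially the FIFO queue $Q$ contains only $(s,0,t_s,\text{none})$ and $\sigma(s)=t_s$; no edge is traversed.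 While $Q\neq\emptyset$: pop the front record $R=(u,d_u,\sigma_u,p_u)$; let $B$ be the set of edges $(u,v,t)\in E$ not yet traversed with $\sigma_u\le t$; for each vertex $v$ such that $B$ contains an edge to $v$ (in any order), let $e=(u,v,t)$ be the edge of $B$ to $v$ with smallest $t$, mark $e$ traversed, and: (i) if $Q$ contains no record of $v$ and $\sigma(v)>t$, create $(v,d_u+1,t,R)$ and append it to $Q$; (ii) if $Q$ contains a record of $v$ with level $d_u+1$ and $\sigma(v)>t$, set that record's time to $t$ and predecessor to $R$; (iii) if $Q$ contains a record of $v$ but none with level $d_u+1$, and $\sigma(v)>t$, create $(v,d_u+1,t,R)$ and append it to $Q$. *)

(* Defs.v *)
From Stdlib Require Import Reals List Relations.
Import ListNotations.
Open Scope R_scope.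

Section TBFS.
Variable V : Type.

Definition edge : Type := (V * V * R)%type.
Definition esrc (e : edge) : V := fst (fst e).
Definition edst (e : edge) : V := snd (fst e).
Definition etime (e : edge) : R := snd e.

Definition temporal_graph (E : list edge) : Prop :=
  NoDup E /\ forall e, In e E -> esrc e <> edst e.

Fixpoint chain (x : V) (tprev : R) (P : list edge) (y : V) : Prop :=
  match P with
  | [] => x = y
  | e :: P' => esrc e = x /\ tprev <= etime e /\ chain (edst e) (etime e) P' y
  end.

Definition temporal_path (E : list edge) (ts : R) (x y : V) (P : list edge) : Prop :=
  P <> [] /\ (forall e, In e P -> In e E) /\ chain x ts P y.

Fixpoint tend (P : list edge) : R :=
  match P with
  | [] => 0
  | [e] => etime e
  | _ :: P' => tend P'
  end.

Definition is_min (A : R -> Prop) (m : R) : Prop :=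
  A m /\ forall x, A x -> m <= x.

(* BFS records (x, d, tau, p); p is the index of the predecessor record in
   the list of all records ever created. *)
Record brec : Type := mkRec { rv : V; rd : nat; rt : R; rp : option nat }.

Fixpoint upd (l : list brec) (j : nat) (r : brec) : list brec :=
  match l, j with
  | [], _ => []
  | _ :: l', O => r :: l'
  | x :: l', S j' => x :: upd l' j' r
  end.

(* Phase: Idle (between pops) or Busy processing a popped record r with
   fields (u, d_u, sigma_u), with the snapshot trav0 of traversed edges at
   pop time (defining B) and the list of target vertices already handled. *)
Inductive phase : Type :=
| Idle
| Busy (r : nat) (u : V) (du : nat) (su : R) (trav0 : list edge) (done : list V).

Record bstate : Type := mkState {
  recs : list brec;       (* all records ever created (the tree T) *)
  queue : list nat;       (* FIFO queue of record indices, front first *)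
  trav : list edge;
  sigma : V -> option R;  (* current value sigma(x); None = infinity *)
  ph : phase
}.

(* sigma(v) > t, with None = infinity *)
Definition sgt (o : option R) (t : R) : Prop :=
  match o with None => True | Some a => t < a end.

Definition sig_upd (sg : V -> option R) (v : V) (t : R) (sg' : V -> option R) : Prop :=
  sg' v = Some t /\ forall x, x <> v -> sg' x = sg x.

Definition inQ (st : bstate) (v : V) : Prop :=
  exists j rec, In j (queue st) /\ nth_error (recs st) j = Some rec /\ rv rec = v.

(* e is in B = {(u,v,t) in E not traversed (at pop time), sigma_u <= t} *)
Definition inB (E : list edge) (trav0 : list edge) (u : V) (su : R) (e : edge) : Prop :=
  In e E /\ ~ In e trav0 /\ esrc e = u /\ su <= etime e.

Definition init_state (s : V) (ts : R) (sg0 : V -> option R) : bstate :=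
  mkState [mkRec s 0 ts None] [0%nat] [] sg0 Idle.

Definition init_sigma (s : V) (ts : R) (sg0 : V -> option R) : Prop :=
  sg0 s = Some ts /\ forall x, x <> s -> sg0 x = None.

Inductive bfs_step (E : list edge) : bstate -> bstate -> Prop :=
| step_pop : forall rs r q tr sg rec,
    nth_error rs r = Some rec ->
    bfs_step E (mkState rs (r :: q) tr sg Idle)
               (mkState rs q tr sg (Busy r (rv rec) (rd rec) (rt rec) tr []))
| step_finish : forall rs q tr sg r u du su tr0 dn,
    (forall e, inB E tr0 u su e -> In (edst e) dn) ->
    bfs_step E (mkState rs q tr sg (Busy r u du su tr0 dn))
               (mkState rs q tr sg Idle)
(* handling one target vertex v: e is the edge of B to v with smallest t *)
| step_case_i : forall rs q tr sg sg' r u du su tr0 dn e,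
    let st := mkState rs q tr sg (Busy r u du su tr0 dn) in
    ~ In (edst e) dn -> inB E tr0 u su e ->
    (forall e', inB E tr0 u su e' -> edst e' = edst e -> etime e <= etime e') ->
    ~ inQ st (edst e) -> sgt (sg (edst e)) (etime e) ->
    sig_upd sg (edst e) (etime e) sg' ->
    bfs_step E st
      (mkState (rs ++ [mkRec (edst e) (S du) (etime e) (Some r)])
               (q ++ [length rs]) (e :: tr) sg' (Busy r u du su tr0 (edst e :: dn)))
| step_case_ii : forall rs q tr sg sg' r u du su tr0 dn e j rec,
    let st := mkState rs q tr sg (Busy r u du su tr0 dn) in
    ~ In (edst e) dn -> inB E tr0 u su e ->
    (forall e', inB E tr0 u su e' -> edst e' = edst e -> etime e <= etime e') ->
    In j q -> nth_error rs j = Some rec -> rv rec = edst e -> rd rec = S du ->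
    sgt (sg (edst e)) (etime e) ->
    sig_upd sg (edst e) (etime e) sg' ->
    bfs_step E st
      (mkState (upd rs j (mkRec (edst e) (S du) (etime e) (Some r)))
               q (e :: tr) sg' (Busy r u du su tr0 (edst e :: dn)))
| step_case_iii : forall rs q tr sg sg' r u du su tr0 dn e,
    let st := mkState rs q tr sg (Busy r u du su tr0 dn) in
    ~ In (edst e) dn -> inB E tr0 u su e ->
    (forall e', inB E tr0 u su e' -> edst e' = edst e -> etime e <= etime e') ->
    inQ st (edst e) ->
    (forall j rec, In j q -> nth_error rs j = Some rec -> rv rec = edst e ->
                   rd rec <> S du) ->
    sgt (sg (edst e)) (etime e) ->
    sig_upd sg (edst e) (etime e) sg' ->
    bfs_step E st
      (mkState (rs ++ [mkRec (edst e) (S du) (etime e) (Some r)])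
               (q ++ [length rs]) (e :: tr) sg' (Busy r u du su tr0 (edst e :: dn)))
(* none of (i)-(iii) applies: sigma(v) <= t; e is only marked traversed *)
| step_none : forall rs q tr sg r u du su tr0 dn e,
    let st := mkState rs q tr sg (Busy r u du su tr0 dn) in
    ~ In (edst e) dn -> inB E tr0 u su e ->
    (forall e', inB E tr0 u su e' -> edst e' = edst e -> etime e <= etime e') ->
    ~ sgt (sg (edst e)) (etime e) ->
    bfs_step E st
      (mkState rs q (e :: tr) sg (Busy r u du su tr0 (edst e :: dn))).

Definition bfs_run (E : list edge) (s : V) (ts : R) (st : bstate) : Prop :=
  exists sg0, init_sigma s ts sg0 /\
    clos_refl_trans _ (bfs_step E) (init_state s ts sg0) st /\
    ph st = Idle /\ queue st = [].

End TBFS.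

Arguments esrc {V}. Arguments edst {V}. Arguments etime {V}.
Arguments temporal_path {V}. Arguments tend {V}. Arguments rv {V}.
Arguments rd {V}. Arguments rt {V}. Arguments rp {V}. Arguments recs {V}.
Arguments bfs_run {V}. Arguments temporal_graph {V}.

(* Main.v *)
From Stdlib Require Import Reals List Relations Lia Lra Classical.
Require Import Defs.
Import ListNotations.
Open Scope R_scope.

Arguments mkRec {V}. Arguments mkState {V}. Arguments queue {V}. Arguments trav {V}.
Arguments sigma {V}. Arguments ph {V}. Arguments Busy {V}. Arguments Idle {V}.
Arguments chain {V}. Arguments inB {V}. Arguments inQ {V}. Arguments sig_upd {V}.
Arguments upd {V}. Arguments bfs_step {V}. Arguments init_state {V}. Arguments init_sigma {V}.

Lemma nth_app_inv {A} (l : list A) x j y : nth_error (l ++ [x]) j = Some y ->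
  (nth_error l j = Some y /\ (j < length l)%nat) \/ (j = length l /\ y = x).
Proof.
  intros H. destruct (Nat.lt_ge_cases j (length l)) as [Hl|Hl].
  - left. rewrite nth_error_app1 in H by lia. auto.
  - right. rewrite nth_error_app2 in H by lia.
    destruct (j - length l)%nat eqn:Ej.
    + simpl in H. inversion H. split; [lia|auto].
    + destruct n; simpl in H; discriminate.
Qed.

Lemma nth_app_new {A} (l : list A) x : nth_error (l ++ [x]) (length l) = Some x.
Proof. rewrite nth_error_app2, Nat.sub_diag by lia. reflexivity. Qed.

Lemma upd_length V (l : list (brec V)) j r : length (upd l j r) = length l.
Proof. revert j; induction l; intros j; destruct j; simpl; auto. Qed.

Lemma upd_nth_neq V (l : list (brec V)) j r k : k <> j -> nth_error (upd l j r) k = nth_error l k.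
Proof.
  revert j k; induction l as [|x l IH]; intros j k H; destruct j; destruct k; simpl; auto; try lia.
  all: apply IH; lia.
Qed.

Lemma upd_nth_eq V (l : list (brec V)) j r : (j < length l)%nat -> nth_error (upd l j r) j = Some r.
Proof.
  revert j; induction l as [|x l IH]; intros j H; destruct j; simpl in *; auto; try lia.
  all: apply IH; lia.
Qed.

Lemma upd_nth_inv V (l : list (brec V)) j r k y : nth_error (upd l j r) k = Some y ->
  (k = j /\ y = r) \/ (k <> j /\ nth_error l k = Some y).
Proof.
  intros H. destruct (Nat.eq_dec k j) as [->|Hne].
  - left. split; auto. destruct (Nat.lt_ge_cases j (length l)).
    + rewrite upd_nth_eq in H by auto. congruence.
    + assert (nth_error (upd l j r) j = None) by (apply nth_error_None; rewrite upd_length; lia).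
      congruence.
  - right. rewrite upd_nth_neq in H; auto.
Qed.
Section Pf.
Variable V : Type.
Variable E : list (edge V).
Variable s : V.
Variable ts : R.

Definition Rex (rs : list (brec V)) (v : V) (L : nat) (T : R) : Prop :=
  exists j rj, nth_error rs j = Some rj /\ rv rj = v /\ (rd rj <= L)%nat /\ rt rj <= T.
Definition RexT (rs : list (brec V)) (v : V) (T : R) : Prop :=
  exists j rj, nth_error rs j = Some rj /\ rv rj = v /\ rt rj <= T.
Definition sle (o : option R) (t : R) : Prop := exists a, o = Some a /\ a <= t.

Fixpoint endt (tp : R) (P : list (edge V)) : R :=
  match P with [] => tp | e :: P' => endt (etime e) P' end.

Definition pathex (v : V) (L : nat) (T : R) : Prop :=
  exists P, (forall e, In e P -> In e E) /\ chain s ts P v /\ (length P <= L)%nat /\ endt ts P = T.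

Definition finished (rs : list (brec V)) (a : nat) : Prop :=
  forall j rj, (j < a)%nat -> nth_error rs j = Some rj -> forall e, In e E -> esrc e = rv rj ->
    rt rj <= etime e -> Rex rs (edst e) (S (rd rj)) (etime e).

Definition Inv (st : bstate V) : Prop :=
  Rex (recs st) s 0 ts /\
  (forall j k rj rk, (j <= k)%nat -> nth_error (recs st) j = Some rj ->
     nth_error (recs st) k = Some rk -> (rd rj <= rd rk)%nat) /\
  (forall j rj, nth_error (recs st) j = Some rj -> sle (sigma st (rv rj)) (rt rj)) /\
  (forall v a, sigma st v = Some a -> RexT (recs st) v a) /\
  (forall e, In e (trav st) -> RexT (recs st) (edst e) (etime e)) /\
  (forall j k rj rk, j <> k -> nth_error (recs st) j = Some rj -> nth_error (recs st) k = Some rk ->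
     rv rj = rv rk -> rd rj <> rd rk) /\
  (forall j k rj rk, nth_error (recs st) j = Some rj -> nth_error (recs st) k = Some rk ->
     rv rj = rv rk -> (rd rj < rd rk)%nat -> rt rk < rt rj) /\
  (forall j rj, nth_error (recs st) j = Some rj -> pathex (rv rj) (rd rj) (rt rj)) /\
  match ph st with
  | Idle => exists a, (a <= length (recs st))%nat /\ queue st = seq a (length (recs st) - a) /\
      finished (recs st) a /\
      (forall j k rj rk, (a <= k)%nat -> nth_error (recs st) j = Some rj ->
         nth_error (recs st) k = Some rk -> (rd rj <= S (rd rk))%nat)
  | Busy r u du su tr0 dn => (r < length (recs st))%nat /\
      queue st = seq (S r) (length (recs st) - S r) /\
      (exists rr, nth_error (recs st) r = Some rr /\ rv rr = u /\ rd rr = du /\ rt rr = su) /\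
      finished (recs st) r /\
      (forall j rj, nth_error (recs st) j = Some rj -> (rd rj <= S du)%nat) /\
      (forall e, In e tr0 -> In e (trav st)) /\
      (forall v, In v dn -> forall e, inB E tr0 u su e -> edst e = v -> Rex (recs st) v (S du) (etime e))
  end.

Definition mono (rs rs' : list (brec V)) : Prop :=
  forall j rj, nth_error rs j = Some rj -> exists rj', nth_error rs' j = Some rj' /\
    rv rj' = rv rj /\ rd rj' = rd rj /\ rt rj' <= rt rj.

Lemma Rex_mono rs rs' v L T : mono rs rs' -> Rex rs v L T -> Rex rs' v L T.
Proof.
  intros Hm (j & rj & H1 & H2 & H3 & H4). destruct (Hm _ _ H1) as (rj' & G1 & G2 & G3 & G4).
  exists j, rj'. repeat split; auto; try congruence; try lia; lra.
Qed.

Lemma RexT_mono rs rs' v T : mono rs rs' -> RexT rs v T -> RexT rs' v T.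
Proof.
  intros Hm (j & rj & H1 & H2 & H4). destruct (Hm _ _ H1) as (rj' & G1 & G2 & G3 & G4).
  exists j, rj'. repeat split; auto; try congruence; lra.
Qed.

Lemma mono_app rs x : mono rs (rs ++ [x]).
Proof.
  intros j rj H. exists rj. repeat split; try lra.
  rewrite nth_error_app1; auto. apply nth_error_Some. congruence.
Qed.

Lemma mono_upd rs j x rj : nth_error rs j = Some rj -> rv x = rv rj -> rd x = rd rj ->
  rt x <= rt rj -> mono rs (upd rs j x).
Proof.
  intros Hj H1 H2 H3 k rk Hk. destruct (Nat.eq_dec k j) as [->|Hne].
  - exists x. rewrite upd_nth_eq. rewrite Hj in Hk. inversion Hk; subst. repeat split; auto.
    apply nth_error_Some. congruence.
  - exists rk. rewrite upd_nth_neq by auto. repeat split; auto; lra.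
Qed.

Lemma finished_mono rs rs' a : mono rs rs' -> (forall j, (j < a)%nat -> nth_error rs' j = nth_error rs j) ->
  finished rs a -> finished rs' a.
Proof.
  intros Hm Heq Hf j rj Hj Hn e He Hs Ht. rewrite Heq in Hn by auto.
  eapply Rex_mono; eauto.
Qed.

Lemma chain_app x tp P y e : chain x tp P y -> esrc e = y -> endt tp P <= etime e ->
  chain x tp (P ++ [e]) (edst e).
Proof.
  revert x tp; induction P as [|e0 P IH]; intros x tp H H1 H2; simpl in *.
  - subst. auto.
  - destruct H as (G1 & G2 & G3). repeat split; auto.
Qed.

Lemma endt_app tp P e : endt tp (P ++ [e]) = etime e.
Proof. revert tp; induction P; intros; simpl; auto. Qed.

Lemma endt_tend tp P : P <> [] -> endt tp P = tend P.
Proof.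
  intros H. destruct P as [|e P]; [congruence|]. clear H. revert tp e.
  induction P as [|a P IH]; intros tp e; [reflexivity|].
  change (endt tp (e :: a :: P)) with (endt (etime e) (a :: P)).
  change (tend (e :: a :: P)) with (tend (a :: P)).
  apply IH.
Qed.

Lemma pathex_ext u du su e : pathex u du su -> In e E -> esrc e = u -> su <= etime e ->
  pathex (edst e) (S du) (etime e).
Proof.
  intros (P & HE & Hc & Hl & Ht) He Hs Hle. exists (P ++ [e]). repeat split.
  - intros e' H. apply in_app_or in H. destruct H as [H|[<-|[]]]; auto.
  - apply chain_app with u; auto. rewrite Ht. auto.
  - rewrite length_app. simpl. lia.
  - apply endt_app.
Qed.

Lemma sgt_sle o t x : sgt o t -> sle o x -> t < x.
Proof. intros H (a & -> & Ha). simpl in H. lra. Qed.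


Lemma inv_append rs q tr sg sg' r u du su tr0 dn e :
  Inv (mkState rs q tr sg (Busy r u du su tr0 dn)) ->
  inB E tr0 u su e ->
  (forall e', inB E tr0 u su e' -> edst e' = edst e -> etime e <= etime e') ->
  (forall j rj, nth_error rs j = Some rj -> rv rj = edst e -> rd rj <> S du) ->
  sgt (sg (edst e)) (etime e) -> sig_upd sg (edst e) (etime e) sg' ->
  Inv (mkState (rs ++ [mkRec (edst e) (S du) (etime e) (Some r)]) (q ++ [length rs]) (e :: tr) sg'
     (Busy r u du su tr0 (edst e :: dn))).
Proof.
  intros HI HB Hmin Hnl Hgt [Hs1 Hs2].
  destruct HI as (Hroot & Hsort & Hsig & Hsig2 & Htr & Hdist & Htm & Hpath & Hr & Hq &
    (rr & Hrr & Hru & Hrd & Hrt) & Hfin & Hbd & Htr0 & Hdn).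
  simpl in *. unfold Inv; simpl.
  set (N := mkRec (edst e) (S du) (etime e) (Some r)).
  assert (Hm : mono rs (rs ++ [N])) by apply mono_app.
  assert (HN : nth_error (rs ++ [N]) (length rs) = Some N) by apply nth_app_new.
  destruct HB as (HB1 & HB2 & HB3 & HB4).
  split. { eapply Rex_mono; eauto. }
  split.
  { intros j k rj rk Hjk Hj Hk. apply nth_app_inv in Hj, Hk.
    destruct Hj as [[Hj Hjl]|[-> ->]]; destruct Hk as [[Hk Hkl]|[-> ->]]; simpl.
    - eapply (Hsort j k); eauto.
    - specialize (Hbd _ _ Hj); lia.
    - lia.
    - lia. }
  split.
  { intros j rj Hj. apply nth_app_inv in Hj.
    destruct Hj as [[Hj _]|[-> ->]]; simpl.
    - destruct (classic (rv rj = edst e)) as [Heq|Hne].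
      + rewrite Heq, Hs1. exists (etime e); split; auto.
        pose proof (Hsig _ _ Hj) as H. rewrite Heq in H. pose proof (sgt_sle _ _ _ Hgt H). lra.
      + rewrite Hs2 by auto. eauto.
    - rewrite Hs1. exists (etime e); split; auto; lra. }
  split.
  { intros v a Ha. destruct (classic (v = edst e)) as [Hve|Hne].
    - subst v. rewrite Hs1 in Ha. inversion Ha; subst. exists (length rs), N. simpl. repeat split; auto; lra.
    - rewrite Hs2 in Ha by auto. eapply RexT_mono; eauto. }
  split.
  { intros e' [<-|He'].
    - exists (length rs), N. simpl. repeat split; auto; lra.
    - eapply RexT_mono; eauto. }
  split.
  { intros j k rj rk Hjk Hj Hk Hv. apply nth_app_inv in Hj, Hk.
    destruct Hj as [[Hj Hjl]|[-> ->]]; destruct Hk as [[Hk Hkl]|[-> ->]]; simpl in *.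
    - eapply (Hdist j k); eauto.
    - apply (Hnl _ _ Hj Hv).
    - intro H. apply (Hnl _ _ Hk (eq_sym Hv)). auto.
    - lia. }
  split.
  { intros j k rj rk Hj Hk Hv Hlt. apply nth_app_inv in Hj, Hk.
    destruct Hj as [[Hj Hjl]|[-> ->]]; destruct Hk as [[Hk Hkl]|[-> ->]]; simpl in *.
    - eapply (Htm j k); eauto.
    - pose proof (Hsig _ _ Hj) as H. rewrite Hv in H. apply (sgt_sle _ _ _ Hgt H).
    - specialize (Hbd _ _ Hk). lia.
    - lia. }
  split.
  { intros j rj Hj. apply nth_app_inv in Hj.
    destruct Hj as [[Hj _]|[-> ->]]; simpl.
    - eauto.
    - rewrite <- Hrd. apply pathex_ext with (rv rr) (rt rr);
        [apply (Hpath r rr Hrr) | auto | congruence | congruence]. }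
  split. { rewrite length_app. simpl. lia. }
  split.
  { rewrite Hq, length_app. simpl.
    replace (length rs + 1 - S r)%nat with (S (length rs - S r)) by lia.
    rewrite seq_S. do 3 f_equal. lia. }
  split. { exists rr. rewrite nth_error_app1 by lia. auto. }
  split. { apply finished_mono with rs; auto. intros j Hj; apply nth_error_app1; lia. }
  split.
  { intros j rj Hj. apply nth_app_inv in Hj. destruct Hj as [[Hj _]|[-> ->]]; simpl; eauto. }
  split. { intros e' H; right; auto. }
  { intros v [<-|Hv] e' He' Hd.
    - exists (length rs), N. simpl. repeat split; auto.
    - eapply Rex_mono; eauto. }
Qed.

Lemma upd_back (rs : list (brec V)) j N k y : nth_error (upd rs j N) k = Some y -> (k = j /\ y = N) \/
  (k <> j /\ nth_error rs k = Some y).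
Proof. apply upd_nth_inv. Qed.

Lemma RexT_Rex rs v T L : (forall j rj, nth_error rs j = Some rj -> (rd rj <= L)%nat) ->
  RexT rs v T -> Rex rs v L T.
Proof. intros Hb (j & rj & H1 & H2 & H3). exists j, rj. repeat split; eauto. Qed.

Lemma inv_upd rs q tr sg sg' r u du su tr0 dn e j rec :
  Inv (mkState rs q tr sg (Busy r u du su tr0 dn)) ->
  inB E tr0 u su e ->
  (forall e', inB E tr0 u su e' -> edst e' = edst e -> etime e <= etime e') ->
  In j q -> nth_error rs j = Some rec -> rv rec = edst e -> rd rec = S du ->
  sgt (sg (edst e)) (etime e) -> sig_upd sg (edst e) (etime e) sg' ->
  Inv (mkState (upd rs j (mkRec (edst e) (S du) (etime e) (Some r))) q (e :: tr) sg'
     (Busy r u du su tr0 (edst e :: dn))).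
Proof.
  intros HI HB Hmin Hjq Hj Hjv Hjd Hgt [Hs1 Hs2].
  destruct HI as (Hroot & Hsort & Hsig & Hsig2 & Htr & Hdist & Htm & Hpath & Hr & Hq &
    (rr & Hrr & Hru & Hrd & Hrt) & Hfin & Hbd & Htr0 & Hdn).
  simpl in *. unfold Inv; simpl.
  set (N := mkRec (edst e) (S du) (etime e) (Some r)).
  assert (Hjl : (S r <= j < length rs)%nat).
  { rewrite Hq in Hjq. apply in_seq in Hjq. lia. }
  assert (Hrec : etime e < rt rec).
  { pose proof (Hsig _ _ Hj) as H. rewrite Hjv in H. apply (sgt_sle _ _ _ Hgt H). }
  assert (Hm : mono rs (upd rs j N)).
  { apply mono_upd with rec; simpl; auto; lra. }
  assert (HN : nth_error (upd rs j N) j = Some N) by (apply upd_nth_eq; lia).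
  assert (Hback : forall k y, nth_error (upd rs j N) k = Some y -> exists y0,
     nth_error rs k = Some y0 /\ rv y = rv y0 /\ rd y = rd y0).
  { intros k y Hk. apply upd_back in Hk. destruct Hk as [[-> ->]|[_ Hk]].
    - exists rec. simpl. auto.
    - exists y. auto. }
  destruct HB as (HB1 & HB2 & HB3 & HB4).
  split. { eapply Rex_mono; eauto. }
  split.
  { intros k1 k2 y1 y2 Hk Hy1 Hy2.
    destruct (Hback _ _ Hy1) as (z1 & Z1 & _ & ->). destruct (Hback _ _ Hy2) as (z2 & Z2 & _ & ->).
    eapply (Hsort k1 k2); eauto. }
  split.
  { intros k y Hk. apply upd_back in Hk. destruct Hk as [[-> ->]|[Hne Hk]]; simpl.
    - rewrite Hs1. exists (etime e); split; auto; lra.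
    - destruct (classic (rv y = edst e)) as [Heq|Hne2].
      + rewrite Heq, Hs1. exists (etime e); split; auto.
        pose proof (Hsig _ _ Hk) as H. rewrite Heq in H. pose proof (sgt_sle _ _ _ Hgt H). lra.
      + rewrite Hs2 by auto. eauto. }
  split.
  { intros v a Ha. destruct (classic (v = edst e)) as [Hve|Hne].
    - subst v. rewrite Hs1 in Ha. inversion Ha; subst. exists j, N. simpl. repeat split; auto; lra.
    - rewrite Hs2 in Ha by auto. eapply RexT_mono; eauto. }
  split.
  { intros e' [<-|He'].
    - exists j, N. simpl. repeat split; auto; lra.
    - eapply RexT_mono; eauto. }
  split.
  { intros k1 k2 y1 y2 Hk Hy1 Hy2 Hv.
    destruct (Hback _ _ Hy1) as (z1 & Z1 & V1 & ->). destruct (Hback _ _ Hy2) as (z2 & Z2 & V2 & ->).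
    eapply (Hdist k1 k2); eauto. congruence. }
  split.
  { intros k1 k2 y1 y2 Hy1 Hy2 Hv Hlt.
    pose proof (Hback _ _ Hy1) as (z1 & Z1 & V1 & D1). pose proof (Hback _ _ Hy2) as (z2 & Z2 & V2 & D2).
    apply upd_back in Hy1, Hy2.
    destruct Hy1 as [[-> ->]|[Hne1 Hy1]]; destruct Hy2 as [[-> ->]|[Hne2 Hy2]]; simpl in *.
    - lia.
    - specialize (Hbd _ _ Z2). lia.
    - pose proof (Hsig _ _ Hy1) as H. rewrite Hv in H. apply (sgt_sle _ _ _ Hgt H).
    - eapply (Htm k1 k2); eauto. }
  split.
  { intros k y Hk. apply upd_back in Hk. destruct Hk as [[-> ->]|[Hne Hk]]; simpl.
    - rewrite <- Hrd. apply pathex_ext with (rv rr) (rt rr);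
        [apply (Hpath r rr Hrr) | auto | congruence | congruence].
    - eauto. }
  split. { rewrite upd_length. lia. }
  split. { rewrite upd_length. auto. }
  split. { exists rr. rewrite upd_nth_neq by lia. auto. }
  split. { apply finished_mono with rs; auto. intros k Hk; apply upd_nth_neq; lia. }
  split.
  { intros k y Hk. destruct (Hback _ _ Hk) as (z & Z & _ & ->). eauto. }
  split. { intros e' H; right; auto. }
  { intros v [<-|Hv] e' He' Hd.
    - exists j, N. simpl. repeat split; auto.
    - eapply Rex_mono; eauto. }
Qed.

Lemma inv_none rs q tr sg r u du su tr0 dn e :
  Inv (mkState rs q tr sg (Busy r u du su tr0 dn)) ->
  inB E tr0 u su e ->
  (forall e', inB E tr0 u su e' -> edst e' = edst e -> etime e <= etime e') ->
  ~ sgt (sg (edst e)) (etime e) ->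
  Inv (mkState rs q (e :: tr) sg (Busy r u du su tr0 (edst e :: dn))).
Proof.
  intros HI HB Hmin Hgt.
  destruct HI as (Hroot & Hsort & Hsig & Hsig2 & Htr & Hdist & Htm & Hpath & Hr & Hq &
    Hrr & Hfin & Hbd & Htr0 & Hdn).
  simpl in *. unfold Inv; simpl.
  assert (Hx : RexT rs (edst e) (etime e)).
  { destruct (sg (edst e)) as [a|] eqn:Ha; simpl in Hgt; [|tauto].
    destruct (Hsig2 _ _ Ha) as (k & y & H1 & H2 & H3). exists k, y. repeat split; auto. lra. }
  refine (conj Hroot (conj Hsort (conj Hsig (conj Hsig2 _)))).
  split. { intros e' [<-|He']; auto. }
  refine (conj Hdist (conj Htm (conj Hpath (conj Hr (conj Hq (conj Hrr (conj Hfin (conj Hbd _)))))))).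
  split. { intros e' H; right; auto. }
  { intros v [<-|Hv] e' He' Hd.
    - apply RexT_Rex; auto. destruct Hx as (k & y & H1 & H2 & H3). exists k, y.
      repeat split; auto. pose proof (Hmin e' He' Hd). lra.
    - auto. }
Qed.

Lemma inv_pop rs r q tr sg rec :
  Inv (mkState rs (r :: q) tr sg Idle) -> nth_error rs r = Some rec ->
  Inv (mkState rs q tr sg (Busy r (rv rec) (rd rec) (rt rec) tr [])).
Proof.
  intros HI Hr.
  destruct HI as (Hroot & Hsort & Hsig & Hsig2 & Htr & Hdist & Htm & Hpath &
    (a & Ha & Hq & Hfin & Hbd)).
  simpl in *. unfold Inv; simpl.
  destruct (length rs - a)%nat as [|m] eqn:Hm; simpl in Hq; [discriminate|].
  inversion Hq; subst r q.
  assert (Hal : (a < length rs)%nat) by (apply nth_error_Some; congruence).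
  refine (conj Hroot (conj Hsort (conj Hsig (conj Hsig2 _)))).
  refine (conj Htr (conj Hdist (conj Htm (conj Hpath _)))).
  split; [auto|].
  split. { f_equal. lia. }
  split. { exists rec. auto. }
  split; [auto|].
  split. { intros j rj Hj. eapply (Hbd j a); eauto. }
  split. { auto. }
  intros v [].
Qed.

Lemma inv_finish rs q tr sg r u du su tr0 dn :
  Inv (mkState rs q tr sg (Busy r u du su tr0 dn)) ->
  (forall e, inB E tr0 u su e -> In (edst e) dn) ->
  Inv (mkState rs q tr sg Idle).
Proof.
  intros HI Hall.
  destruct HI as (Hroot & Hsort & Hsig & Hsig2 & Htr & Hdist & Htm & Hpath & Hr & Hq &
    (rr & Hrr & Hru & Hrd & Hrt) & Hfin & Hbd & Htr0 & Hdn).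
  simpl in *. unfold Inv; simpl.
  refine (conj Hroot (conj Hsort (conj Hsig (conj Hsig2 _)))).
  refine (conj Htr (conj Hdist (conj Htm (conj Hpath _)))).
  exists (S r). split; [lia|]. split; [auto|]. split.
  { intros j rj Hj Hn e He Hs Ht.
    destruct (Nat.eq_dec j r) as [->|Hne].
    - rewrite Hrr in Hn. inversion Hn; subst rj. rewrite Hrd.
      destruct (classic (In e tr0)) as [Hin|Hnin].
      + apply RexT_Rex; auto.
      + assert (HBe : inB E tr0 u su e) by (repeat split; auto; congruence).
        apply (Hdn (edst e) (Hall e HBe) e HBe eq_refl).
    - apply (Hfin j rj); auto. lia. }
  { intros j k rj rk Hk Hj Hk'. pose proof (Hsort r k rr rk ltac:(lia) Hrr Hk').
    pose proof (Hbd _ _ Hj). lia. }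
Qed.

Lemma inv_init sg0 : init_sigma s ts sg0 -> Inv (init_state s ts sg0).
Proof.
  intros [H1 H2]. unfold Inv, init_state; simpl.
  assert (Hone : forall j rj, nth_error [mkRec s 0 ts None] j = Some rj -> j = 0%nat /\ rj = mkRec s 0 ts None).
  { intros j rj H. destruct j; simpl in H. inversion H; auto. destruct j; discriminate. }
  split. { exists 0%nat, (mkRec s 0 ts None). simpl. repeat split; auto; lra. }
  split. { intros j k rj rk _ Hj Hk. apply Hone in Hj, Hk. destruct Hj as [_ ->], Hk as [_ ->]. simpl; lia. }
  split. { intros j rj Hj. apply Hone in Hj. destruct Hj as [_ ->]. simpl. exists ts. split; auto; lra. }
  split. { intros v a Ha. destruct (classic (v = s)) as [->|Hne].
           - rewrite H1 in Ha. injection Ha as Ha. exists 0%nat, (mkRec s 0 ts None). simpl. repeat split; auto; lra.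
           - rewrite H2 in Ha by auto. discriminate. }
  split. { intros e []. }
  split. { intros j k rj rk Hjk Hj Hk. apply Hone in Hj, Hk. lia. }
  split. { intros j k rj rk Hj Hk. apply Hone in Hj, Hk. destruct Hj as [_ ->], Hk as [_ ->]. simpl; lia. }
  split. { intros j rj Hj. apply Hone in Hj. destruct Hj as [_ ->]. simpl.
           exists []. simpl. split; [intros e []|]. split; [reflexivity|]. split; [lia|reflexivity]. }
  exists 0%nat. split; [simpl; lia|]. split; [reflexivity|]. split.
  { intros j rj Hj. lia. }
  { intros j k rj rk _ Hj Hk. apply Hone in Hj, Hk. destruct Hj as [_ ->], Hk as [_ ->]. simpl; lia. }
Qed.


Lemma inv_inq rs q tr sg r u du su tr0 dn :
  Inv (mkState rs q tr sg (Busy r u du su tr0 dn)) ->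
  forall j rj, nth_error rs j = Some rj -> rd rj = S du -> In j q.
Proof.
  intros HI j rj Hj Hd.
  destruct HI as (Hroot & Hsort & Hsig & Hsig2 & Htr & Hdist & Htm & Hpath & Hr & Hq &
    (rr & Hrr & Hru & Hrd & Hrt) & Hfin & Hbd & Htr0 & Hdn).
  simpl in *. rewrite Hq. apply in_seq.
  assert (j < length rs)%nat by (apply nth_error_Some; congruence).
  destruct (Nat.le_gt_cases j r).
  - pose proof (Hsort j r rj rr H0 Hj Hrr). lia.
  - lia.
Qed.

Lemma inv_step st st' : bfs_step E st st' -> Inv st -> Inv st'.
Proof.
  intros H HI. destruct H.
  - apply inv_pop; auto.
  - exact (inv_finish _ _ _ _ _ _ _ _ _ _ HI H).
  - unfold st in *. apply (inv_append rs q tr sg sg'); auto.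
    intros j rj Hj Hv Hl. apply H2. exists j, rj. simpl. split; [|auto].
    eapply inv_inq; eauto.
  - unfold st in *. eapply inv_upd; eauto.
  - unfold st in *. apply (inv_append rs q tr sg sg'); auto.
    intros j rj Hj Hv Hl. apply (H3 j rj); auto. eapply inv_inq; eauto.
  - unfold st in *. apply inv_none; auto.
Qed.

Lemma inv_rt st st' : clos_refl_trans _ (bfs_step E) st st' -> Inv st -> Inv st'.
Proof.
  induction 1; auto. apply inv_step; auto.
Qed.

Lemma complete rs : finished rs (length rs) ->
  forall P x tp y L, Rex rs x L tp -> (forall e, In e P -> In e E) -> chain x tp P y ->
  Rex rs y (L + length P) (endt tp P).
Proof.
  intros Hf P. induction P as [|e P IH]; intros x tp y L Hx HE Hc; simpl in *.
  - subst. rewrite Nat.add_0_r. auto.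
  - destruct Hc as (H1 & H2 & H3).
    destruct Hx as (j & rj & J1 & J2 & J3 & J4).
    assert (Hjl : (j < length rs)%nat) by (apply nth_error_Some; congruence).
    pose proof (Hf j rj Hjl J1 e (HE e (or_introl eq_refl)) ltac:(congruence) ltac:(lra)) as Hn.
    replace (L + S (length P))%nat with (S L + length P)%nat by lia.
    apply IH with (edst e); auto.
    destruct Hn as (k & rk & K1 & K2 & K3 & K4). exists k, rk. repeat split; auto; lia.
Qed.

End Pf.

Theorem lemma13 (V : Type) (E : list (edge V)) (s : V) (ts : R)
  (HG : temporal_graph E) (st : bstate V) (Hrun : bfs_run E s ts st)
  (i : nat) (vo : brec V) (Hvo : nth_error (recs st) i = Some vo)
  (Hv : rv vo <> s) :
  is_min (fun tau => exists P, temporal_path E ts s (rv vo) P /\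
                        (length P <= rd vo)%nat /\ tend P = tau)
         (rt vo).
Proof.
  destruct Hrun as (sg0 & Hinit & Hrt & Hph & Hq).
  pose proof (inv_rt V E s ts _ _ Hrt (inv_init V E s ts sg0 Hinit)) as HI.
  destruct HI as (Hroot & Hsort & Hsig & Hsig2 & Htr & Hdist & Htm & Hpath & Hrest).
  rewrite Hph in Hrest. destruct Hrest as (a & Ha & Hqa & Hfin & _).
  rewrite Hq in Hqa.
  assert (a = length (recs st)).
  { destruct (length (recs st) - a)%nat eqn:Hm; simpl in Hqa; [lia|discriminate]. }
  subst a.
  split.
  - destruct (Hpath i vo Hvo) as (P & HE & Hc & Hl & Ht).
    assert (HP : P <> []).
    { intro; subst P. simpl in Hc. auto. }
    exists P. split; [|split]; auto.
    + split; auto.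
    + rewrite <- Ht. symmetry. apply endt_tend; auto.
  - intros x (P & (HP & HE & Hc) & Hl & Hx).
    pose proof (complete V E (recs st) Hfin P s ts (rv vo) 0 Hroot HE Hc) as Hr.
    rewrite (endt_tend V _ _ HP) in Hr. simpl in Hr.
    destruct Hr as (k & rk & K1 & K2 & K3 & K4).
    destruct (Nat.eq_dec k i) as [->|Hne].
    + rewrite Hvo in K1. inversion K1; subst. lra.
    + assert (rd rk <> rd vo) by (apply (Hdist k i rk vo); auto).
      assert (rt vo < rt rk) by (apply (Htm k i rk vo); auto; lia).
      lra.
Qed.
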